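(* Let $\mathcal{B}$ be a complete topological ring and let $\mathrm{e}\colon\mathcal{B}\to\mathcal{B}\{T\}$ be a restricted exponential homomorphism. Assume that $\mathrm{e}$ has a local slice $s\in\mathcal{B}$ such that $\mathrm{e}(s)=s+T$. Then $\mathcal{B}\cong\mathcal{B}^{\mathrm{e}}\{s\}$ (that is, the continuous $\mathcal{B}^{\mathrm{e}}$-algebra homomorphism $\mathcal{B}^{\mathrm{e}}\{S\}\to\mathcal{B}$, $S\mapsto s$, is an isomorphism of topological rings), and under this identification $\mathrm{e}$ coincides with the homomorphism of topological $\mathcal{B}^{\mathrm{e}}$-algebras $\mathcal{B}^{\mathrm{e}}\{s\}\to\mathcal{B}^{\mathrm{e}}\{s\}\{T\}\cong\mathcal{B}^{\mathrm{e}}\{s,T\}$, $s\mapsto s+T$.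
   Context: Conventions: topological rings are linearly topologized with a countable fundamental system of open ideals; homomorphisms are continuous; complete means the canonical map to $\varprojlim_{\mathfrak{a}}\mathcal{B}/\mathfrak{a}$ (open ideals, discrete quotients) is a topological isomorphism. For a complete topological ring $\mathcal{C}$, $\mathcal{C}\{T_1,\dots,T_r\}$ denotes restricted power series (coefficients converging to $0$), topologized by the ideals of series with all coefficients in a given open ideal of $\mathcal{C}$. A restricted exponential homomorphism is a continuous ring homomorphism $\mathrm{e}\colon\mathcal{B}\to\mathcal{B}\{T\}$, $\mathrm{e}(b)=\sum_i\mathrm{e}_i(b)T^i$, with $\mathrm{e}_0=\mathrm{id}_{\mathcal{B}}$ and $\sum_{i,j}\mathrm{e}_j(\mathrm{e}_i(b))T'^jT^i=\sum_\ell\mathrm{e}_\ell(b)(T+T')^\ell$ in $\mathcal{B}\{T,T'\}$ for all $b$. $\mathcal{B}^{\mathrm{e}}=\{b:\mathrm{e}(b)=b\}$ with the induced topology (a complete subring). A local slice is $s\in\mathcal{B}$ with $\mathrm{e}(s)$ a polynomial of degree $1$ in $T$. *)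

(* Defs.v *)
From HB Require Import structures.
From mathcomp Require Import all_boot all_order all_algebra.
Set Implicit Arguments. Unset Strict Implicit. Unset Printing Implicit Defensive.
Import GRing.Theory.
Local Open Scope ring_scope.

Section LinTop.
Variable B : comPzRingType.

Definition is_ideal (P : B -> Prop) : Prop :=
  [/\ P 0, (forall x y, P x -> P y -> P (x + y)) & (forall r x, P x -> P (r * x))].

(* A linear topology with a countable fundamental system of open ideals,
   given (w.l.o.g.) as a decreasing chain I 0 ⊇ I 1 ⊇ ... of ideals. *)
Definition lin_top (I : nat -> B -> Prop) : Prop :=
  (forall n, is_ideal (I n)) /\ (forall n x, I n.+1 x -> I n x).

(* Completeness: B -> lim_n B / I n is bijective (topological iso is then
   automatic).  Injectivity: Hausdorff; surjectivity: every compatible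
   system (x n mod I n)_n lifts. *)
Definition complete (I : nat -> B -> Prop) : Prop :=
  (forall b, (forall n, I n b) -> b = 0) /\
  (forall x : nat -> B, (forall n, I n (x n.+1 - x n)) ->
     exists b, forall n, I n (x n - b)).

(* Coefficient sequences of restricted power series: coefficients -> 0. *)
Definition restricted (I : nat -> B -> Prop) (a : nat -> B) : Prop :=
  forall n, exists N, forall k, (N <= k)%N -> I n (a k).

Definition pconv (a b : nat -> B) : nat -> B :=
  fun k => \sum_(i < k.+1) a i * b (k - i)%N.

Definition pone : nat -> B := fun k => (k == 0%N)%:R.

Definition sums (I : nat -> B -> Prop) (u : nat -> B) (b : B) : Prop :=
  forall n, exists N, forall m, (N <= m)%N -> I n (\sum_(k < m) u k - b).

(* e : B -> B{T}, b |-> sum_i (e b i) T^i, is a restricted exponential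
   homomorphism. *)
Definition restricted_exp (I : nat -> B -> Prop) (e : B -> nat -> B) : Prop :=
  (forall b, restricted I (e b)) /\
  (forall x y k, e (x + y) k = e x k + e y k) /\
  (forall x y k, e (x * y) k = pconv (e x) (e y) k) /\
  (forall k, e 1 k = pone k) /\
  (forall n, exists m, forall b, I m b -> forall k, I n (e b k)) /\
  (forall b, e b 0%N = b) /\
  (forall b i j, e (e b i) j = ('C(i + j, i))%:R * e b (i + j)%N).
      (* coefficient of T^i T'^j in
         sum_{i,j} e_j(e_i b) T'^j T^i = sum_l e_l(b) (T+T')^l *)

Definition fixed (e : B -> nat -> B) (b : B) : Prop :=
  forall k, e b k = (k == 0%N)%:R * b.

(* Elements of B^e{S}: restricted sequences with coefficients in B^e. *)
Definition in_fixed_series (I : nat -> B -> Prop) (e : B -> nat -> B)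
  (a : nat -> B) : Prop := restricted I a /\ forall k, fixed e (a k).

End LinTop.

(* Main.v *)
Require Import Defs.
From mathcomp Require Import all_boot all_order all_algebra.
From Stdlib Require Import ClassicalEpsilon FunctionalExtensionality.
From mathcomp Require Import ring.
Set Implicit Arguments. Unset Strict Implicit. Unset Printing Implicit Defensive.
Import GRing.Theory.
Local Open Scope ring_scope.

Section Topo.
Variable B : comPzRingType.
Variable I : nat -> B -> Prop.
Hypothesis Iid : forall n, is_ideal (I n).
Hypothesis Idec : forall n x, I n.+1 x -> I n x.
Hypothesis Haus : forall b, (forall n, I n b) -> b = 0.
Hypothesis Cpl : forall x : nat -> B, (forall n, I n (x n.+1 - x n)) ->
  exists b, forall n, I n (x n - b).

Lemma I0 n : I n 0. Proof. by case: (Iid n). Qed.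
Lemma ID n x y : I n x -> I n y -> I n (x + y). Proof. by case: (Iid n) => _ H _; apply: H. Qed.
Lemma IM n r x : I n x -> I n (r * x). Proof. by case: (Iid n) => _ _ H; apply: H. Qed.
Lemma IMr n r x : I n x -> I n (x * r). Proof. by rewrite mulrC; apply: IM. Qed.
Lemma IN n x : I n x -> I n (- x). Proof. by move=> H; rewrite -mulN1r; apply: IM. Qed.
Lemma IB n x y : I n x -> I n y -> I n (x - y). Proof. by move=> *; apply: ID => //; apply: IN. Qed.
Lemma Isum n (T : Type) (r : seq T) (P : pred T) (F : T -> B) :
  (forall i, P i -> I n (F i)) -> I n (\sum_(i <- r | P i) F i).
Proof. move=> H; apply: (big_ind (I n)) => //; [exact: I0 | exact: ID]. Qed.
Lemma Imono m n x : (m <= n)%N -> I n x -> I m x.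
Proof.
move=> /subnK <-; elim: (n - m)%N => [//|d IH] H; apply: IH.
by apply: Idec; rewrite -addSn.
Qed.
Lemma Ieq n x y : x = y -> I n x -> I n y. Proof. by move=> ->. Qed.

Lemma part_diff (F : nat -> B) a b : (a <= b)%N ->
  \sum_(k < b) F k - \sum_(k < a) F k = \sum_(a <= k < b) F k.
Proof.
move=> ab; rewrite -!(big_mkord xpredT) (big_cat_nat (leq0n a) ab) /=.
by rewrite addrAC subrr add0r.
Qed.

Lemma Isum_nat n a b (F : nat -> B) : (forall k, (a <= k)%N -> I n (F k)) ->
  I n (\sum_(a <= k < b) F k).
Proof.
move=> H; rewrite big_nat_cond; apply: Isum => i /andP[/andP[ai _] _]; exact: H.
Qed.

Lemma sums_unique u b c : sums I u b -> sums I u c -> b = c.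
Proof.
move=> Hb Hc; apply/eqP; rewrite -subr_eq0; apply/eqP/Haus => n.
have [N1 H1] := Hb n; have [N2 H2] := Hc n.
have := IB (H2 (maxn N1 N2) (leq_maxr _ _)) (H1 (maxn N1 N2) (leq_maxl _ _)).
by apply: Ieq; ring.
Qed.

Lemma sums_tail u b n J : sums I u b -> (forall k, (J <= k)%N -> I n (u k)) ->
  I n (\sum_(k < J) u k - b).
Proof.
move=> Hs Hu; have [N HN] := Hs n.
have := IB (HN (maxn J N) (leq_maxr _ _)) (Isum_nat (maxn J N) Hu).
rewrite -(part_diff _ (leq_maxl J N)).
by apply: Ieq; rewrite opprB addrC addrA subrK.
Qed.

Lemma sums_closed u b n : sums I u b -> (forall k, I n (u k)) -> I n b.
Proof.
move=> Hs Hu; have := IN (sums_tail (J := 0) Hs (fun k _ => Hu k)).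
by rewrite big_ord0 sub0r opprK.
Qed.

Lemma sums_ext u v b : (forall k, u k = v k) -> sums I u b -> sums I v b.
Proof.
move=> E H n; have [N HN] := H n; exists N => m /HN.
by under eq_bigr do rewrite E.
Qed.

Lemma sums_add u v b c : sums I u b -> sums I v c ->
  sums I (fun k => u k + v k) (b + c).
Proof.
move=> Hb Hc n; have [N1 H1] := Hb n; have [N2 H2] := Hc n.
exists (maxn N1 N2) => m; rewrite geq_max => /andP[m1 m2].
have := ID (H1 m m1) (H2 m m2); apply: Ieq.
by rewrite big_split /= opprD addrACA.
Qed.

Lemma sums_mull r u b : sums I u b -> sums I (fun k => r * u k) (r * b).
Proof.
move=> H n; have [N HN] := H n; exists N => m /HN /(IM r).
by apply: Ieq; rewrite mulrBr mulr_sumr.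
Qed.

Lemma sums_mulr r u b : sums I u b -> sums I (fun k => u k * r) (b * r).
Proof.
move=> H; rewrite mulrC; apply: sums_ext (sums_mull r H) => k; exact: mulrC.
Qed.

Lemma sums_finite u J : (forall k, (J <= k)%N -> u k = 0) ->
  sums I u (\sum_(k < J) u k).
Proof.
move=> H n; exists J => m Jm; rewrite part_diff //.
rewrite big_nat_cond big1; first exact: I0.
by move=> i /andP[/andP[Ji _] _]; exact: H.
Qed.

Lemma sums0 : sums I (fun _ => 0) 0.
Proof. by have := sums_finite (u := fun _ => 0) (J := 0) (fun _ _ => erefl); rewrite big_ord0. Qed.

Lemma sums_bigsum (F : nat -> nat -> B) (L : nat -> B) p :
  (forall l, sums I (fun j => F j l) (L l)) ->
  sums I (fun j => \sum_(l < p) F j l) (\sum_(l < p) L l).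
Proof.
move=> H; elim: p => [|p IH].
  rewrite big_ord0; apply: sums_ext sums0 => k; by rewrite big_ord0.
rewrite big_ord_recr /=; apply: sums_ext (sums_add IH (H p)) => k.
by rewrite big_ord_recr.
Qed.

Lemma sums_shift u b l : (forall j, (j < l)%N -> u j = 0) -> sums I u b ->
  sums I (fun m => u (m + l)%N) b.
Proof.
move=> H0 Hs n; have [N HN] := Hs n; exists N => M NM.
have := HN (M + l)%N (leq_trans NM (leq_addr _ _)); apply: Ieq; congr (_ - _).
rewrite -(big_mkord xpredT) (big_cat_nat (leq0n l) (leq_addl M l)) /=.
rewrite big_nat_cond big1 ?add0r; last by move=> i /andP[/andP[_ il] _]; exact: H0.
by rewrite -{1}(add0n l) big_addn addnK big_mkord.
Qed.

Lemma restricted_mul u r : restricted I u -> restricted I (fun k => r k * u k).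
Proof. move=> H n; have [N HN] := H n; exists N => k /HN; exact: IM. Qed.

Lemma sums_ex u : restricted I u -> exists b, sums I u b.
Proof.
move=> Hu.
have Nf : forall n, {N | forall k, (N <= k)%N -> I n (u k)}.
  by move=> n; apply: constructive_indefinite_description; exact: Hu.
pose M := fix M n := if n is n'.+1 then maxn (M n') (sval (Nf n)) else sval (Nf 0%N).
have MS n : (M n <= M n.+1)%N by rewrite /= leq_maxl.
have NM n : (sval (Nf n) <= M n)%N by case: n => [|n] //=; rewrite leq_maxr.
have Mmono m n : (m <= n)%N -> (M m <= M n)%N.
  by move=> mn; apply: (homo_leq (r := leq) leqnn leq_trans MS).
pose x n := \sum_(k < M n) u k.
have [b Hb] : exists b, forall n, I n (x n - b).
  apply: Cpl => n; rewrite /x part_diff //; apply: Isum_nat => k Mk.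
  exact: (svalP (Nf n)) (leq_trans (NM n) Mk).
exists b => n; exists (M n) => m Mm.
have := ID (Isum_nat m (fun k Mk => svalP (Nf n) k (leq_trans (NM n) Mk))) (Hb n).
by rewrite -part_diff // /x; apply: Ieq; rewrite addrA subrK.
Qed.

Definition lim (u : nat -> B) : B := epsilon (inhabits 0) (fun b => sums I u b).

Lemma lim_sums u b : sums I u b -> lim u = b.
Proof.
move=> H; apply: (sums_unique (u := u)) => //.
by apply: (epsilon_spec (inhabits 0) (fun b => sums I u b)); exists b.
Qed.

Lemma lim_spec u : restricted I u -> sums I u (lim u).
Proof. by case/sums_ex=> b Hb; rewrite (lim_sums Hb). Qed.


Lemma triangle (f : nat -> nat -> B) K :
  \sum_(l < K) \sum_(k < l.+1) f (l - k)%N k = \sum_(k < K) \sum_(j < K - k) f j k.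
Proof.
elim: K => [|K IH]; first by rewrite !big_ord0.
rewrite big_ord_recr /= IH.
transitivity (\sum_(k < K.+1) (\sum_(j < K - k) f j k + f (K - k)%N k)).
  rewrite big_split /= [in RHS]big_ord_recr /= subnn big_ord0 addr0.
  by rewrite (big_ord_recr K (fun k => f (K - k)%N k)).
apply: eq_bigr => k _; rewrite subSn; last by rewrite -ltnS.
by rewrite big_ord_recr.
Qed.

Lemma double (f : nat -> nat -> B) (g : nat -> B) c :
  (forall n, exists N, forall j k, (N <= j + k)%N -> I n (f j k)) ->
  (forall k, sums I (fun j => f j k) (g k)) ->
  sums I (fun l => \sum_(k < l.+1) f (l - k)%N k) c -> sums I g c.
Proof.
move=> Hd Hg Hh n; have [N HN] := Hd n; have [N' HN'] := Hh n.
exists (maxn N N') => K; rewrite geq_max => /andP[NK N'K].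
set S := \sum_(k < K) \sum_(j < K) f j k.
have A : I n (\sum_(k < K) g k - S).
  rewrite /S -sumrB; apply: Isum => k _.
  have := IN (sums_tail (J := K) (Hg k) (fun j Kj => HN j k (leq_trans NK (leq_trans Kj (leq_addr _ _))))).
  by apply: Ieq; rewrite opprB.
have Bm : I n (S - \sum_(l < K) \sum_(k < l.+1) f (l - k)%N k).
  rewrite triangle /S -sumrB; apply: Isum => k _.
  rewrite (part_diff (fun j => f j k)) ?leq_subr //; apply: Isum_nat => j Hj; apply: HN.
  apply: (leq_trans NK); rewrite addnC -leq_subLR; exact: Hj.
have := ID (ID A Bm) (HN' K N'K); apply: Ieq; ring.
Qed.

Lemma double_restricted (f : nat -> nat -> B) :
  (forall n, exists N, forall j k, (N <= j + k)%N -> I n (f j k)) ->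
  restricted I (fun l => \sum_(k < l.+1) f (l - k)%N k).
Proof.
move=> Hd n; have [N HN] := Hd n; exists N => l Nl; apply: Isum => k _; apply: HN.
by rewrite subnK // -ltnS.
Qed.

Lemma sums_cauchy u v b c : restricted I u -> restricted I v -> sums I u b -> sums I v c ->
  sums I (fun l => \sum_(k < l.+1) u (l - k)%N * v k) (b * c).
Proof.
move=> Ru Rv Hb Hc.
have Hd : forall n, exists N, forall j k, (N <= j + k)%N -> I n (u j * v k).
  move=> n; have [N1 H1] := Ru n; have [N2 H2] := Rv n; exists (N1 + N2)%N => j k jk.
  case: (leqP N1 j) => [/H1 /(IMr (v k)) //|jN1].
  apply: IM; apply: H2; rewrite -(leq_add2l N1); apply: leq_trans jk _.
  by rewrite leq_add2r ltnW.
have [c' Hc'] := sums_ex (double_restricted Hd).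
have := double Hd (fun k => sums_mulr (v k) Hb) Hc'.
by move=> Hg; rewrite (sums_unique (sums_mull b Hc) Hg).
Qed.


Variable e : B -> nat -> B.
Hypothesis Hr : forall b, restricted I (e b).
Hypothesis Hadd : forall x y k, e (x + y) k = e x k + e y k.
Hypothesis Hmul : forall x y k, e (x * y) k = pconv (e x) (e y) k.
Hypothesis Hone : forall k, e 1 k = pone B k.
Hypothesis Hcont : forall n, exists m, forall b, I m b -> forall k, I n (e b k).
Hypothesis H0 : forall b, e b 0%N = b.
Hypothesis Hcomp : forall b i j, e (e b i) j = ('C(i + j, i))%:R * e b (i + j)%N.
Variable s : B.
Hypothesis Hs : forall k, e s k = (if k == 0%N then s else if k == 1%N then 1 else 0).

Lemma e0 k : e 0 k = 0.
Proof. have h := Hadd 0 0 k; rewrite addr0 in h; apply: (addrI (e 0 k)); by rewrite -h addr0. Qed.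
Lemma eN x k : e (- x) k = - e x k.
Proof. have h := Hadd x (- x) k; rewrite subrr e0 in h; apply: (addrI (e x k)); by rewrite -h subrr. Qed.
Lemma eB x y k : e (x - y) k = e x k - e y k.
Proof. by rewrite Hadd eN. Qed.
Lemma emuln x n k : e (x *+ n) k = e x k *+ n.
Proof. elim: n => [|n IH]; first by rewrite !mulr0n e0. by rewrite !mulrS Hadd IH. Qed.

Lemma e_fixmul c x k : fixed e c -> e (c * x) k = c * e x k.
Proof.
move=> Hc; rewrite Hmul /pconv big_ord_recl /= Hc mul1r subn0 big1 ?addr0 // => i _.
by rewrite Hc /= mul0r mul0r.
Qed.
Lemma fixed_nat n : fixed e n%:R.
Proof. by move=> k; rewrite emuln Hone /pone mulr_natr. Qed.
Lemma fixed_mul c d : fixed e c -> fixed e d -> fixed e (c * d).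
Proof. by move=> Hc Hd k; rewrite e_fixmul // Hd mulrCA. Qed.
Lemma fixed_N1 : fixed e (-1).
Proof. by move=> k; rewrite eN Hone /pone mulrN1. Qed.
Lemma fixed_expN1 j : fixed e ((-1) ^+ j).
Proof.
elim: j => [|j IH]; first by rewrite expr0; exact: (fixed_nat 1).
by rewrite exprS; apply: fixed_mul => //; exact: fixed_N1.
Qed.

Lemma e_spow m l : e (s ^+ m) l = ('C(m, l))%:R * s ^+ (m - l).
Proof.
elim: m l => [|m IH] l.
  by rewrite expr0 Hone /pone bin0n mulr1.
rewrite exprS Hmul /pconv; case: l => [|l].
  by rewrite big_ord1 Hs IH /= !subn0 !bin0 !mul1r exprS.
rewrite big_ord_recl big_ord_recl big1; last first.
  by move=> i _; rewrite Hs /= mul0r.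
rewrite addr0 Hs Hs /= /bump /= !IH mul1r subn0 subn1 /= binS natrD mulrDl.
congr (_ + _); case: (ltnP l m) => lm.
  by rewrite mulrCA -exprS subnSK.
by rewrite bin_small ?ltnS // !mul0r mulr0.
Qed.

Lemma e_nspow j l : e ((- s) ^+ j) l = (-1) ^+ j * (('C(j, l))%:R * s ^+ (j - l)).
Proof. by rewrite [(- s) ^+ j]exprNn e_fixmul ?e_spow //; exact: fixed_expN1. Qed.

Lemma e_sums u b i : sums I u b -> sums I (fun k => e (u k) i) (e b i).
Proof.
move=> Hu n; have [m Hm] := Hcont n; have [N HN] := Hu m; exists N => M /HN /Hm H.
have := H i; apply: Ieq; rewrite eB; congr (_ - _).
elim/big_ind2: _ => //; [by rewrite e0 | by move=> x1 x2 y1 y2 <- <-; rewrite Hadd].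
Qed.

Definition phi (a : nat -> B) := lim (fun k => a k * s ^+ k).
Definition pterm x j := (- s) ^+ j * e x j.
Definition pi x := lim (pterm x).

Lemma phi_sums a : restricted I a -> sums I (fun k => a k * s ^+ k) (phi a).
Proof.
move=> Ha; apply: lim_spec => n; have [N HN] := Ha n; exists N => k /HN; exact: IMr.
Qed.
Lemma pi_sums x : sums I (pterm x) (pi x).
Proof. by apply: lim_spec; apply: restricted_mul. Qed.

Lemma pi_add x y : pi (x + y) = pi x + pi y.
Proof.
apply: lim_sums; apply: sums_ext (sums_add (pi_sums x) (pi_sums y)) => j.
by rewrite /pterm Hadd mulrDr.
Qed.
Lemma pi_B x y : pi (x - y) = pi x - pi y.
Proof. have h := pi_add (x - y) y; rewrite subrK in h; by rewrite h addrK. Qed.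
Lemma pi0 : pi 0 = 0.
Proof. by have := pi_B 0 0; rewrite !subrr. Qed.
Lemma pi_sum (F : nat -> B) K : pi (\sum_(k < K) F k) = \sum_(k < K) pi (F k).
Proof. elim: K => [|K IH]; first by rewrite !big_ord0 pi0. by rewrite !big_ord_recr pi_add IH. Qed.

Lemma pi_e_small y n N k : (forall l, (N <= l)%N -> I n (e y l)) -> (N <= k)%N ->
  I n (pi (e y k)).
Proof.
move=> Hy Nk; apply: (sums_closed (pi_sums _)) => j; rewrite /pterm Hcomp.
by apply: IM; apply: IM; apply: Hy; apply: leq_trans Nk (leq_addr _ _).
Qed.

Lemma pi_cont n : exists m, forall x, I m x -> I n (pi x).
Proof.
have [m Hm] := Hcont n; exists m => x /Hm H.
by apply: (sums_closed (pi_sums _)) => j; apply: IM.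
Qed.

Lemma pi_mono d m : fixed e d -> pi (d * s ^+ m) = (m == 0%N)%:R * d.
Proof.
move=> Hd; apply: lim_sums.
have -> : (m == 0%N)%:R * d = \sum_(j < m.+1) pterm (d * s ^+ m) j.
  transitivity (d * (s + - s) ^+ m); first by rewrite subrr expr0n mulrC.
  rewrite exprDn mulr_sumr; apply: eq_bigr => j _.
  by rewrite /pterm e_fixmul // e_spow -mulr_natl; ring.
apply: sums_finite => j mj; rewrite /pterm e_fixmul // e_spow bin_small //.
by rewrite mulr0n mul0r !mulr0.
Qed.

Lemma pi_series d X : (forall k, fixed e (d k)) ->
  sums I (fun k => d k * s ^+ k) X -> pi X = d 0%N.
Proof.
move=> Hd HX; apply/eqP; rewrite -subr_eq0; apply/eqP/Haus => n.
have [m Hm] := pi_cont n; have [N HN] := HX m.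
have := Hm _ (HN N.+1 (leqnSn _)); rewrite pi_B (pi_sum (fun k => d k * s ^+ k)).
rewrite (eq_bigr (fun k : 'I_N.+1 => (k == 0%N :> nat)%:R * d k)); last first.
  by move=> k _; rewrite pi_mono.
rewrite big_ord_recl big1 ?addr0 /=; last by move=> i _; rewrite mul0r.
by rewrite mul1r => /IN; apply: Ieq; rewrite opprB.
Qed.

Lemma shift_fixed a i : in_fixed_series I e a ->
  in_fixed_series I e (fun k => ('C(k + i, i))%:R * a (k + i)%N).
Proof.
case=> Ra Fa; split; last by move=> k; apply: fixed_mul => //; exact: fixed_nat.
move=> n; have [N HN] := Ra n; exists N => k Nk; apply: IM; apply: HN.
exact: leq_trans Nk (leq_addr _ _).
Qed.

Lemma e_phi a i : in_fixed_series I e a ->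
  e (phi a) i = phi (fun k => ('C(k + i, i))%:R * a (k + i)%N).
Proof.
move=> Ha; have [Ra Fa] := Ha; apply/esym/lim_sums.
have H1 := e_sums i (phi_sums Ra).
have H2 := sums_shift (l := i) _ H1.
apply: sums_ext (H2 _) => [k|j ji]; rewrite e_fixmul // e_spow.
  by rewrite addnK; ring.
by rewrite (bin_small ji) ?mulr0n mul0r mulr0.
Qed.

Lemma recover a k : in_fixed_series I e a -> pi (e (phi a) k) = a k.
Proof.
move=> Ha; rewrite e_phi //; have [Ra' Fa'] := shift_fixed k Ha.
by rewrite (pi_series Fa' (phi_sums Ra')) /= add0n binn mul1r.
Qed.


Lemma binom_id m l i : (l <= i)%N ->
  ('C(m + l, l) * 'C(m + i, m + l) = 'C(m + i, i) * 'C(i, l))%N.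
Proof.
move=> li.
have h1 := bin_fact (leq_addl m l); rewrite addnK in h1.
have h2 := bin_fact (_ : (m + l <= m + i)%N); rewrite subnDl in h2.
have h3 := bin_fact li.
have h4 := bin_fact (leq_addl m i); rewrite addnK in h4.
apply/eqP; rewrite -(eqn_pmul2r (_ : 0 < l`! * m`! * (i - l)`!)%N); last first.
  by rewrite !muln_gt0 !fact_gt0.
apply/eqP.
transitivity ('C(m + i, m + l) * (('C(m + l, l) * (l`! * m`!)) * (i - l)`!))%N; first ring.
rewrite h1 h2 //; last by rewrite leq_add2l.
transitivity ('C(m + i, i) * (('C(i, l) * (l`! * (i - l)`!)) * m`!))%N; last ring.
by rewrite h3 h4.
Qed.

Lemma pi_fixed x : fixed e (pi x).
Proof.
move=> [|i]; first by rewrite H0 mul1r.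
rewrite /= mul0r.
pose t j l := e ((- s) ^+ j) l * e (e x j) (i.+1 - l)%N.
have Et j : e (pterm x j) i.+1 = \sum_(l < i.+2) t j l by rewrite /pterm Hmul /pconv.
have Rt l : restricted I (fun j => t j l).
  move=> n; have [N HN] := Hr x n; exists N => j Nj; rewrite /t Hcomp.
  by apply: IM; apply: IM; apply: HN; exact: leq_trans Nj (leq_addr _ _).
pose L l := lim (fun j => t j l).
have SL l : sums I (fun j => t j l) (L l) := lim_spec (Rt l).
have A : e (pi x) i.+1 = \sum_(l < i.+2) L l.
  apply: (sums_unique (e_sums i.+1 (pi_sums x))).
  by apply: sums_ext (sums_bigsum (F := t) i.+2 SL) => j; rewrite Et.
rewrite A.
have SL' l : sums I (fun m => t (m + l)%N l) (L l).
  apply: sums_shift (SL l) => j jl; rewrite /t e_nspow (bin_small jl); ring.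
have H := sums_bigsum (F := fun m l => t (m + l)%N l) i.+2 SL'.
apply/esym; apply: (sums_unique _ H); apply: sums_ext sums0 => m.
symmetry.
transitivity (\sum_(l < i.+2) ((-1) ^+ m * s ^+ m * ('C(m + i.+1, i.+1))%:R * e x (m + i.+1)%N)
   * (1 ^+ (i.+1 - l) * (-1) ^+ l *+ 'C(i.+1, l))).
  apply: eq_bigr => l _; have li : (l <= i.+1)%N by rewrite -ltnS.
  rewrite /t e_nspow Hcomp addnK -addnA (subnKC li).
  have E' : (('C(m + l, l))%:R * ('C(m + i.+1, m + l))%:R : B)
      = ('C(m + i.+1, i.+1))%:R * ('C(i.+1, l))%:R by rewrite -!natrM binom_id.
  rewrite -mulr_natr expr1n mul1r exprD.
  transitivity ((-1) ^+ m * (-1) ^+ l * s ^+ m * e x (m + i.+1)%N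
     * (('C(m + l, l))%:R * ('C(m + i.+1, m + l))%:R)); first ring.
  by rewrite E'; ring.
by rewrite -mulr_sumr -exprDn subrr exprS mul0r mulr0.
Qed.

Lemma rterm a : restricted I a -> restricted I (fun k => a k * s ^+ k).
Proof. move=> Ha n; have [N HN] := Ha n; exists N => k /HN; exact: IMr. Qed.

Lemma surj b : exists a, in_fixed_series I e a /\ phi a = b.
Proof.
exists (fun k => pi (e b k)); split; first split.
- move=> n; have [N HN] := Hr b n; exists N => k Nk; exact: pi_e_small HN Nk.
- move=> k; exact: pi_fixed.
apply: lim_sums.
pose f j k := pterm (e b k) j * s ^+ k.
have Hd : forall n, exists N, forall j k, (N <= j + k)%N -> I n (f j k).
  move=> n; have [N HN] := Hr b n; exists N => j k Njk.
  rewrite /f /pterm Hcomp; apply: IMr; apply: IM; apply: IM; apply: HN.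
  by rewrite addnC.
have Hg k : sums I (fun j => f j k) (pi (e b k) * s ^+ k).
  exact: sums_mulr (pi_sums (e b k)).
have Eh l : \sum_(k < l.+1) f (l - k)%N k = e b l * (- s + s) ^+ l.
  rewrite exprDn mulr_sumr; apply: eq_bigr => k _; have kl : (k <= l)%N by rewrite -ltnS.
  rewrite /f /pterm Hcomp (subnKC kl) -mulr_natr; ring.
have Hh : sums I (fun l => \sum_(k < l.+1) f (l - k)%N k) b.
  have H : sums I (fun l => \sum_(k < l.+1) f (l - k)%N k)
             (\sum_(l < 1) \sum_(k < l.+1) f (l - k)%N k).
    apply: sums_finite => -[|l] // _; by rewrite Eh addNr exprS mul0r mulr0.
  by rewrite big_ord1 Eh expr0 mulr1 H0 in H.
exact: double Hd Hg Hh.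
Qed.

Lemma main_sec :
  exists phi : (nat -> B) -> B,
        (forall a, in_fixed_series I e a -> sums I (fun k => a k * s ^+ k) (phi a)) /\
        (forall a a', in_fixed_series I e a -> in_fixed_series I e a' ->
           phi (fun k => a k + a' k) = phi a + phi a') /\
        (forall a a', in_fixed_series I e a -> in_fixed_series I e a' ->
           phi (pconv a a') = phi a * phi a') /\
        phi (@pone B) = 1 /\
        (forall a a', in_fixed_series I e a -> in_fixed_series I e a' ->
           phi a = phi a' -> a = a') /\
        (forall b, exists a, in_fixed_series I e a /\ phi a = b) /\
        (forall n, exists m, forall a, in_fixed_series I e a ->
           (forall k, I m (a k)) -> I n (phi a)) /\
        (forall n, exists m, forall a, in_fixed_series I e a ->
           I m (phi a) -> forall k, I n (a k)) /\
        (forall a, in_fixed_series I e a -> forall i,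
           e (phi a) i = phi (fun k => ('C(k + i, i))%:R * a (k + i)%N)).
Proof.
exists phi; split; first by move=> a [Ra _]; exact: phi_sums.
split.
  move=> a a' [Ra _] [Ra' _]; apply: lim_sums.
  by apply: sums_ext (sums_add (phi_sums Ra) (phi_sums Ra')) => k; rewrite mulrDl.
split.
  move=> a a' [Ra _] [Ra' _]; apply: lim_sums.
  have := sums_cauchy (rterm Ra') (rterm Ra) (phi_sums Ra') (phi_sums Ra).
  rewrite mulrC; apply: sums_ext => l.
  rewrite /pconv mulr_suml; apply: eq_bigr => k _.
  have E : s ^+ l = s ^+ (l - k) * s ^+ k by rewrite -exprD subnK // -ltnS.
  rewrite E; ring.
split.
  apply: lim_sums.
  have H : sums I (fun k => pone B k * s ^+ k) (\sum_(k < 1) pone B k * s ^+ k).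
    apply: sums_finite => -[|k] // _; rewrite /pone /=; ring.
  by rewrite big_ord1 /pone /= expr0 mulr1 in H.
split.
  move=> a a' Ha Ha' E; apply: functional_extensionality => k.
  by rewrite -(recover k Ha) E recover.
split; first exact: surj.
split.
  move=> n; exists n => a [Ra _] Ha; apply: (sums_closed (phi_sums Ra)) => k.
  exact: IMr.
split.
  move=> n; have [m Hm] := Hcont n; exists m => a Ha Hp k.
  rewrite -(recover k Ha); apply: (pi_e_small (N := 0%N)) => // l _; exact: Hm _ Hp l.
move=> a Ha i; exact: e_phi.
Qed.

End Topo.

Theorem corollary2p18 (B : comPzRingType) (I : nat -> B -> Prop)
  (e : B -> nat -> B) (s : B) :
  lin_top I -> complete I -> restricted_exp I e ->
  (* e(s) = s + T *)
  (forall k, e s k = (if k == 0%N then s else if k == 1%N then 1 else 0)) ->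
  exists phi : (nat -> B) -> B,
    (* phi is the map B^e{S} -> B, S |-> s *)
        (forall a, in_fixed_series I e a -> sums I (fun k => a k * s ^+ k) (phi a)) /\
        (* it is a ring homomorphism on B^e{S} *)
        (forall a a', in_fixed_series I e a -> in_fixed_series I e a' ->
           phi (fun k => a k + a' k) = phi a + phi a') /\
        (forall a a', in_fixed_series I e a -> in_fixed_series I e a' ->
           phi (pconv a a') = phi a * phi a') /\
        phi (@pone B) = 1 /\
        (* bijective *)
        (forall a a', in_fixed_series I e a -> in_fixed_series I e a' ->
           phi a = phi a' -> a = a') /\
        (forall b, exists a, in_fixed_series I e a /\ phi a = b) /\
        (* continuous, with continuous inverse *)
        (forall n, exists m, forall a, in_fixed_series I e a ->
           (forall k, I m (a k)) -> I n (phi a)) /\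
        (forall n, exists m, forall a, in_fixed_series I e a ->
           I m (phi a) -> forall k, I n (a k)) /\
      (* under phi, e is S |-> S + T: the T^i-coefficient of
           sum_k a_k (S+T)^k is sum_k C(k+i,i) a_(k+i) S^k *)
        (forall a, in_fixed_series I e a -> forall i,
           e (phi a) i = phi (fun k => ('C(k + i, i))%:R * a (k + i)%N)).
Proof.
move=> [Iid Idec] [Haus Cpl] [Hr [Hadd [Hmul [Hone [Hcont [H0 Hcomp]]]]]] Hs.
by eapply main_sec; eassumption.
Qed.
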